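(* Let $n\ge3$, $1\le d\le n-2$, $D=\binom{n-1}{d}$. Let $H$ be the graph whose vertices are the labeled $d$-out-regular digraphs on $[n]$, two distinct digraphs being adjacent iff one is obtained from the other by changing the out-neighborhood of a single vertex, and let $m_G(G')=\frac1{n(D-1)+1}$ if $G'=G$ or $G'$ is adjacent to $G$, and $0$ otherwise. Then $\kappa(G_1,G_2)\ge\frac1n$ for all distinct $G_1,G_2\in V(H)$.
   Context: A directed graph here has no loops and no multiple arcs; it is $d$-out-regular if every vertex has out-degree $d$. For a graph $H$ with random walk $m$ (each $m_x$ a probability distribution supported on $x$ and its neighbors), $d_H$ the graph distance on $H$, the transportation distance is $W(m_1,m_2)=\inf_A\sum_{x,y}A(x,y)d_H(x,y)$ over couplings $A$ of $m_1,m_2$, and the Ollivier Ricci curvature is $\kappa(x,y)=1-W(m_x,m_y)/d_H(x,y)$. *)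

(* Defs.v *)
From HB Require Import structures.
From mathcomp Require Import all_boot all_order all_algebra.
Set Implicit Arguments. Unset Strict Implicit. Unset Printing Implicit Defensive.
Import Order.TTheory GRing.Theory Num.Theory.
Local Open Scope ring_scope.

Fixpoint ball (T : finType) (e : rel T) (k : nat) (x : T) : {set T} :=
  match k with
  | 0 => [set x]
  | k'.+1 => ball e k' x :|: [set y | [exists z in ball e k' x, e z y]]
  end.

(* graph distance: least k with y in ball k x.  In a connected graph every
   distance is < #|T|, so the search range [0, #|T|) suffices. *)
Definition gdist (T : finType) (e : rel T) (x y : T) : nat :=
  find (fun k => y \in ball e k x) (iota 0 #|T|).

Definition coupling (R : realFieldType) (T : finType)
  (m1 m2 : T -> R) (A : T -> T -> R) : Prop :=
  [/\ forall x y, 0 <= A x y,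
      forall x, \sum_(y : T) A x y = m1 x &
      forall y, \sum_(x : T) A x y = m2 y].

Definition transport_cost (R : realFieldType) (T : finType) (e : rel T)
  (A : T -> T -> R) : R :=
  \sum_(x : T) \sum_(y : T) A x y * (gdist e x y)%:R.

Definition W_le (R : realFieldType) (T : finType) (e : rel T)
  (m1 m2 : T -> R) (c : R) : Prop :=
  forall eps : R, 0 < eps ->
    exists A : T -> T -> R, coupling m1 m2 A /\ transport_cost e A <= c + eps.

(* kappa(x,y) >= k  <=>  1 - W(m_x,m_y)/d(x,y) >= k
                    <=>  W(m_x,m_y) <= (1 - k) d(x,y)   (d(x,y) > 0) *)
Definition ricci_ge (R : realFieldType) (T : finType) (e : rel T)
  (m : T -> T -> R) (x y : T) (k : R) : Prop :=
  W_le e (m x) (m y) ((1 - k) * (gdist e x y)%:R).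

(* a loopless simple digraph on 'I_n, given by out-neighbourhoods,
   in which every vertex has out-degree d *)
Definition out_regular (n d : nat) (f : {ffun 'I_n -> {set 'I_n}}) : bool :=
  [forall v, (v \notin f v) && (#|f v| == d)].

Definition outreg (n d : nat) : finType :=
  {f : {ffun 'I_n -> {set 'I_n}} | out_regular d f}.

Definition Hadj (n d : nat) : rel (outreg n d) :=
  fun G G' => (G != G') &&
    [exists v : 'I_n, [forall u : 'I_n, (u != v) ==> (val G u == val G' u)]].

Definition Hwalk (R : realFieldType) (n d : nat) (G G' : outreg n d) : R :=
  if (G' == G) || Hadj G G'
  then ((n * ('C(n.-1, d) - 1) + 1)%N%:R)^-1 else 0.

(* Main.v *)
Require Import Defs.
From HB Require Import structures.
From mathcomp Require Import all_boot all_order all_algebra.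
From mathcomp Require Import zify ring.
Import Order.TTheory GRing.Theory Num.Theory.
Set Implicit Arguments. Unset Strict Implicit. Unset Printing Implicit Defensive.

Section Basics.
Variables n d : nat.
Local Notation T := (outreg n d).

Definition nb (x : T) (u : 'I_n) : {set 'I_n} := (val x) u.
Definition dset (x y : T) : {set 'I_n} := [set u | nb x u != nb y u].
Definition ham (x y : T) : nat := #|dset x y|.

Lemma eqT (x y : T) : (forall u, nb x u = nb y u) -> x = y.
Proof. by move=> h; apply: val_inj; apply/ffunP => u; exact: h. Qed.

Lemma dsetC x y : dset x y = dset y x.
Proof. by apply/setP => u; rewrite !inE eq_sym. Qed.

Lemma hamC x y : ham x y = ham y x.
Proof. by rewrite /ham dsetC. Qed.

Lemma ham0 x y : ham x y = 0 -> x = y.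
Proof.
move/eqP; rewrite cards_eq0 => /eqP h; apply: eqT => u.
apply/eqP; apply: contraT => hu.
have : u \in dset x y by rewrite inE.
by rewrite h inE.
Qed.

Lemma ham_tri x y z : ham x z <= ham x y + ham y z.
Proof.
rewrite /ham; apply: leq_trans (_ : #|dset x y :|: dset y z| <= _).
  apply: subset_leq_card; apply/subsetP => u; rewrite !inE.
  by apply: contraLR; rewrite negb_or !negbK => /andP [/eqP-> /eqP->].
by rewrite cardsU leq_subr.
Qed.

Lemma adj_ham z y : Hadj z y -> ham z y <= 1.
Proof.
case/andP => _ /existsP [v /forallP hv].
rewrite /ham -(cards1 v); apply: subset_leq_card; apply/subsetP => u.
rewrite !inE; apply: contraR => huv.
by have := hv u; rewrite huv.
Qed.

Lemma ball_ham j x y : y \in ball (@Hadj n d) j x -> ham x y <= j.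
Proof.
elim: j y => [|j IH] y /=.
  by rewrite inE => /eqP ->; rewrite /ham leqn0 cards_eq0; apply/eqP/setP => u; rewrite !inE eqxx.
rewrite in_setU inE => /orP [/IH h|/existsP [z /andP [hz hzy]]]; first by rewrite (leq_trans h).
apply: leq_trans (ham_tri x z y) _.
by rewrite -addn1 leq_add // ?IH // adj_ham.
Qed.

Lemma mix_proof (G H : T) (v : 'I_n) :
  out_regular d [ffun u => if u == v then nb H u else nb G u].
Proof.
apply/forallP => u; rewrite ffunE; case: (u == v).
- by have /forallP := valP H; move/(_ u).
- by have /forallP := valP G; move/(_ u).
Qed.

Definition mixT (G H : T) v : T := exist (fun f => out_regular d f) _ (mix_proof G H v).

Lemma nb_mix G H v u : nb (mixT G H v) u = if u == v then nb H u else nb G u.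
Proof. by rewrite /nb /= ffunE. Qed.

Lemma ham_ball j x y : ham x y = j -> y \in ball (@Hadj n d) j x.
Proof.
elim: j y => [|j IH] y /=.
  by move/ham0 => ->; rewrite inE.
move=> hj.
have : (0 < #|dset x y|) by rewrite -/(ham x y) hj.
case/card_gt0P => v; rewrite inE => hv.
set z := mixT y x v.
have hz : ham x z = j.
  have : dset x z = dset x y :\ v.
    apply/setP => u; rewrite !inE /z nb_mix; case: (u =P v) => [->|]; by rewrite ?eqxx.
  by rewrite /ham => ->; move: hj; rewrite /ham (cardsD1 v) inE hv add1n => -[].
rewrite in_setU; apply/orP; right; rewrite inE; apply/existsP; exists z.
rewrite (IH _ hz) /=; apply/andP; split.
  apply/eqP => ez; move: hv; rewrite -ez /z nb_mix eqxx eqxx //.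
apply/existsP; exists v; apply/forallP => u; apply/implyP => huv.
by rewrite /z /= ffunE (negbTE huv).
Qed.

Lemma gdist_le x y : gdist (@Hadj n d) x y <= ham x y.
Proof.
rewrite /gdist.
set s := iota 0 #|T|.
set p := (fun k => y \in ball (@Hadj n d) k x).
case: (ltnP (ham x y) (size s)) => hs.
  rewrite leqNgt; apply/negP => hlt.
  have := before_find 0 hlt.
  rewrite /s nth_iota; last by rewrite -(size_iota 0 #|T|).
  rewrite add0n /p (ham_ball (erefl _)) //.
exact: leq_trans (find_size _ _) hs.
Qed.

Lemma gdist_ge x y : ham x y <= #|T| -> ham x y <= gdist (@Hadj n d) x y.
Proof.
move=> hT; rewrite /gdist.
set s := iota 0 #|T|.
set p := (fun k => y \in ball (@Hadj n d) k x).
case hh: (has p s).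
  have hf : find p s < size s by rewrite -has_find.
  have := nth_find 0 hh.
  rewrite /s nth_iota; last by move: hf; rewrite /s size_iota.
  rewrite add0n /p; exact: ball_ham.
move: hh; rewrite has_find => /negbT; rewrite -leqNgt => h.
apply: leq_trans hT _; apply: leq_trans h; rewrite /s size_iota; exact: leqnn.
Qed.

Definition agreeOff (G : T) (v : 'I_n) (x : T) :=
  [forall u, (u != v) ==> (nb x u == nb G u)].

Lemma out_nb (x : T) u : (u \notin nb x u) && (#|nb x u| == d).
Proof. by have /forallP := valP x; move/(_ u). Qed.

Lemma aO_eq G v x y : agreeOff G v x -> agreeOff G v y -> nb x v = nb y v -> x = y.
Proof.
move=> /forallP hx /forallP hy hv; apply: eqT => u.
case: (u =P v) => [->//|/eqP huv].
by have := hx u; have := hy u; rewrite huv /= => /eqP -> /eqP ->.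
Qed.

Lemma card_aO G v : #|[set x | agreeOff G v x]| = 'C(n.-1, d).
Proof.
have inj : {in [set x | agreeOff G v x] &, injective (fun x => nb x v)}.
  by move=> x y; rewrite !inE; exact: aO_eq.
rewrite -(card_in_imset inj).
have -> : [set nb x v | x in [set x | agreeOff G v x]] =
          [set A : {set 'I_n} | A \subset [set~ v] & #|A| == d].
  apply/setP => A; rewrite inE; apply/imsetP/idP.
    case=> x _ ->; case/andP: (out_nb x v) => h1 ->; rewrite andbT.
    apply/subsetP => u hu; rewrite !inE; apply/eqP => huv; move: hu; rewrite huv => hu; by rewrite hu in h1.
  case/andP => hA1 hA2.
  have pf : out_regular d [ffun u => if u == v then A else nb G u].
    apply/forallP => u; rewrite ffunE; case: (u =P v) => [->|_]; last exact: out_nb.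
    rewrite hA2 andbT; apply/negP => hv.
    by have := subsetP hA1 v hv; rewrite !inE eqxx.
  exists (exist (fun f => out_regular d f) _ pf); last by rewrite /nb /= ffunE eqxx.
  rewrite inE; apply/forallP => u; apply/implyP => huv.
  by rewrite /nb /= ffunE (negbTE huv).
by rewrite cards_draws cardsC1 card_ord.
Qed.

Lemma card_sum (P : pred T) : #|[set x | P x]| = \sum_x (P x : nat).
Proof.
rewrite -sum1_card big_mkcond /=; apply: eq_bigr => x _; rewrite inE.
by case: (P x).
Qed.

Lemma aO_refl G v : agreeOff G v G.
Proof. by apply/forallP => u; rewrite eqxx implybT. Qed.

Lemma aO_uniq G v w x : agreeOff G v x -> agreeOff G w x -> x != G -> v = w.
Proof.
move=> /forallP hv /forallP hw hx.
have [u hu] : exists u, nb x u != nb G u.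
  apply/existsP; apply: contraR hx; rewrite negb_exists => /forallP h.
  by apply/eqP; apply: eqT => u; have := h u; rewrite negbK => /eqP.
have := hv u; have := hw u; rewrite (negbTE hu) /= !implybF !negbK.
by move=> /eqP -> /eqP ->.
Qed.

Lemma card_U G (V : {set 'I_n}) : V != set0 ->
  #|[set x | [exists v in V, agreeOff G v x]]| = 1 + #|V| * ('C(n.-1, d) - 1).
Proof.
case/set0Pn => v0 hv0.
rewrite card_sum.
have e : forall x, ([exists v in V, agreeOff G v x] : nat) =
   (x == G) + \sum_(v in V) (agreeOff G v x && (x != G)).
  move=> x; case: (x =P G) => [->|/eqP hx].
    have -> : \sum_(v in V) (agreeOff G v G && ~~ true) = 0.
      by apply: big1 => v _; rewrite andbF.
    by have -> : [exists v in V, agreeOff G v G] by apply/existsP; exists v0; rewrite hv0 aO_refl.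
  rewrite add0n; case: (boolP [exists v in V, agreeOff G v x]).
    case/existsP => w /andP [hw hxw].
    rewrite (bigD1 w) //= hxw big1 // => u /andP [_ huw].
    case hu: (agreeOff G u x) => //.
    by move: huw; rewrite (aO_uniq hu hxw hx) eqxx.
  rewrite negb_exists => /forallP h; rewrite big1 // => u hu.
  by have := h u; rewrite hu /= andbT; case: (agreeOff G u x).
rewrite (eq_bigr _ (fun x _ => e x)) big_split /=.
congr (_ + _).
  rewrite -card_sum (_ : [set x | x == G] = [set G]) ?cards1 //.
  by apply/setP => x; rewrite !inE.
rewrite exchange_big /= -sum_nat_const; apply: eq_bigr => v _.
rewrite -card_sum (_ : [set x | agreeOff G v x & x != G] = [set x | agreeOff G v x] :\ G).
  by rewrite -(card_aO G v) (cardsD1 G [set x | agreeOff G v x]) inE aO_refl add1n subSS subn0.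
by apply/setP => x; rewrite !inE andbC.
Qed.

Lemma aO_mix G H v : agreeOff G v (mixT G H v).
Proof. by apply/forallP => u; apply/implyP => huv; rewrite nb_mix (negbTE huv). Qed.

Lemma mix_neq G H v : v \in dset G H -> mixT G H v != G.
Proof.
rewrite inE => hv; apply/eqP => e; move: hv.
by rewrite -{1}e nb_mix !eqxx.
Qed.

Lemma mix_inj G H v w : v \in dset G H -> mixT G H v = mixT G H w -> v = w.
Proof.
rewrite inE => hv e; apply/eqP; apply: contraT => hvw.
have := congr1 (fun z => nb z v) e; rewrite /= !nb_mix eqxx (negbTE hvw) => ehg.
by move: hv; rewrite ehg eqxx.
Qed.

Lemma mix_out G H v : v \notin dset G H -> mixT G H v = G.
Proof.
rewrite inE negbK => /eqP hv; apply: eqT => u; rewrite nb_mix.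
by case: (u =P v) => [->|].
Qed.

Lemma HadjE G x : Hadj G x = (x != G) && [exists v, agreeOff G v x].
Proof.
rewrite /Hadj eq_sym; congr (_ && _); apply: eq_existsb => v.
by apply: eq_forallb => u; case: (u != v) => //=; rewrite eq_sym.
Qed.

Lemma aO_neq G v x : agreeOff G v x -> x != G -> nb x v != nb G v.
Proof.
move=> hx hxG; apply: contra hxG => /eqP e; apply/eqP.
exact: aO_eq hx (aO_refl G v) e.
Qed.
End Basics.

Section Coupling.
Variables n d : nat.
Local Notation T := (outreg n d).

Definition L1 (G H : T) (x : T) :=
  (x == G) || [exists v in dset G H, x == mixT G H v].
Definition Pc (G H : T) (x y : T) := [exists v, [&& agreeOff G v x, agreeOff H v y,
  nb x v == nb y v, nb x v != nb G v & nb x v != nb H v]].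
Definition Qc (G H : T) (x y : T) := [&& L1 G H x, L1 H G y, ~~ ((x == G) && (y == H)) &
  ~~ [exists v in dset G H, (x == mixT G H v) && (y == mixT H G v)]].
Definition R1 (G H : T) (x : T) :=
  [exists v, [&& agreeOff G v x, nb x v != nb G v & nb x v != nb H v]].

Lemma Pc_sym G H x y : Pc G H x y = Pc H G y x.
Proof.
apply: eq_existsb => v; rewrite [nb y v == _]eq_sym.
case: (nb x v =P nb y v) => [->|_]; last by rewrite !andbF.
by case: (agreeOff G v x); case: (agreeOff H v y); case: (nb y v != nb G v);
   case: (nb y v != nb H v).
Qed.

Lemma Qc_sym G H x y : Qc G H x y = Qc H G y x.
Proof.
rewrite /Qc (andbC (x == G)) dsetC.
have -> : [exists v in dset H G, (x == mixT G H v) && (y == mixT H G v)] =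
          [exists v in dset H G, (y == mixT H G v) && (x == mixT G H v)].
  by apply: eq_existsb => v; rewrite (andbC (x == _)).
by case: (L1 G H x); case: (L1 H G y).
Qed.

Lemma card_Pc G H x : #|[set y | Pc G H x y]| = R1 G H x.
Proof.
case: (boolP (R1 G H x)) => [/existsP [v /and3P [hx hG hH]]|hR].
  apply: (@etrans _ _ 1); last done; rewrite -(cards1 (mixT H x v)).
  have -> : [set y | Pc G H x y] = [set mixT H x v]; last done.
  apply/setP => y; rewrite !inE.
  apply/idP/eqP.
    case/existsP => w /and5P [hxw hyw exy hwG hwH].
    have xG : x != G by apply: contra hwG => /eqP ->.
    have ewv := aO_uniq hxw hx xG; subst w.
    apply: eqT => u; rewrite nb_mix; case: (u =P v) => [->|/eqP huv]; first by apply/eqP; rewrite eq_sym.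
    by have /forallP /(_ u) := hyw; rewrite huv /= => /eqP.
  move=> ->; apply/existsP; exists v; rewrite hx aO_mix nb_mix !eqxx hG hH.
  done.
apply/eqP; rewrite cards_eq0; apply/eqP/setP => y; rewrite !inE.
apply/negbTE; apply: contra hR => /existsP [w /and5P [hxw _ _ hwG hwH]].
by apply/existsP; exists w; rewrite hxw hwG hwH.
Qed.

Lemma L1_set G H : [set y | L1 G H y] = G |: [set mixT G H v | v in dset G H].
Proof.
apply/setP => y; rewrite !inE; congr (_ || _); apply/existsP/imsetP.
  by case=> v /andP [hv /eqP ->]; exists v.
by case=> v hv ->; exists v; rewrite hv eqxx.
Qed.

Lemma card_L1 G H : #|[set y | L1 G H y]| = (ham G H).+1.
Proof.
rewrite L1_set cardsU1 card_in_imset; last by move=> v w hv _; exact: mix_inj.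
have -> : G \notin [set mixT G H v | v in dset G H].
  by apply/imsetP => -[v hv e]; move: (mix_neq hv); rewrite -e eqxx.
done.
Qed.

Lemma mixT_in_L1 G H v : L1 G H (mixT G H v).
Proof.
rewrite /L1; case: (boolP (v \in dset G H)) => hv.
  by apply/orP; right; apply/existsP; exists v; rewrite hv eqxx.
by rewrite mix_out // eqxx.
Qed.

Lemma card_Qc G H x : #|[set y | Qc G H x y]| = if L1 G H x then ham G H else 0.
Proof.
case: (boolP (L1 G H x)) => hL; last first.
  by apply/eqP; rewrite cards_eq0; apply/eqP/setP => y; rewrite !inE /Qc (negbTE hL).
have key : forall z, z \in [set y | L1 H G y] ->
   [set y | Qc G H x y] = [set y | L1 H G y] :\ z -> #|[set y | Qc G H x y]| = ham G H.
  move=> z hz ->; apply/eqP; rewrite -(eqn_add2l (z \in [set y | L1 H G y])) -cardsD1 hz card_L1 hamC.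
  rewrite /=.
  done.
case/orP: hL => [/eqP ex|/existsP [v /andP [hv /eqP ex]]].
  apply: (key H); first by rewrite inE /L1 eqxx.
  apply/setP => y; rewrite !inE /Qc /L1 ex eqxx /= andbC; congr (_ && _).
  rewrite -[RHS]andbT; congr (_ && _).
  apply/negP => /existsP [w /andP [hw /andP [/eqP e _]]].
  by move: (mix_neq hw); rewrite -e eqxx.
apply: (key (mixT H G v)); first by rewrite inE mixT_in_L1.
apply/setP => y; rewrite !inE /Qc ex mixT_in_L1 /= (negbTE (mix_neq hv)) /= andbC.
congr (_ && _); congr negb; apply/existsP/eqP.
  by case=> w /and3P [hw /eqP e /eqP ->]; rewrite (mix_inj hv e).
by move=> ->; exists v; rewrite hv !eqxx.
Qed.


Lemma R1_L1 G H x : ~~ (R1 G H x && L1 G H x).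
Proof.
apply/negP => /andP [/existsP [w /and3P [hxw hG hH]] /orP [/eqP ex|/existsP [v /andP [hv /eqP ex]]]].
  by move: hG; rewrite ex eqxx.
move: hG hH; rewrite ex !nb_mix; case: (w == v); by rewrite eqxx.
Qed.

Lemma R1_L1_supp G H x : (R1 G H x || L1 G H x) = (x == G) || Hadj G x.
Proof.
rewrite HadjE; apply/idP/idP.
  case/orP => [/existsP [w /and3P [hxw hG hH]]|/orP [->//|/existsP [v /andP [hv /eqP ex]]]].
    apply/orP; right; apply/andP; split; last by apply/existsP; exists w.
    by apply: contra hG => /eqP ->.
  apply/orP; right; rewrite ex mix_neq //; apply/existsP; exists v; exact: aO_mix.
case/orP => [hx|/andP [hxG /existsP [v hv]]]; first by rewrite /L1 hx orbT.
have hxv := aO_neq hv hxG.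
case: (boolP (nb x v == nb H v)) => hH.
  apply/orP; right; apply/orP; right; apply/existsP; exists v.
  have hvd : v \in dset G H by rewrite inE -(eqP hH) eq_sym.
  rewrite hvd; apply/eqP; apply: (aO_eq hv (aO_mix G H v)).
  by rewrite nb_mix eqxx (eqP hH).
by apply/orP; left; apply/existsP; exists v; rewrite hv hxv hH.
Qed.

Lemma dset_sub_card (x y G H : T) t : t \in dset G H ->
  dset x y \subset dset G H :\ t -> ham x y < ham G H.
Proof.
move=> ht hs; rewrite /ham (cardsD1 t (dset G H)) ht add1n ltnS.
exact: subset_leq_card.
Qed.

Lemma cost_bound G H x y : (Pc G H x y || Qc G H x y) ->
  ham x y + [exists v in dset G H, agreeOff G v x] <= ham G H.
Proof.
case/orP.
  case/existsP => v /and5P [hx hy exy hG hH].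
  have xG : x != G by apply: contra hG => /eqP ->.
  have hs : dset x y \subset dset G H :\ v.
    apply/subsetP => u; rewrite !inE; case: (u =P v) => [->|/eqP huv /=].
      by rewrite exy.
    have /forallP /(_ u) := hx; have /forallP /(_ u) := hy.
    by rewrite huv /= => /eqP -> /eqP ->.
  case: (boolP (v \in dset G H)) => hv.
    have h := dset_sub_card hv hs.
    by case: existsP => _; rewrite ?addn1 ?addn0 // ltnW.
  have -> : [exists v in dset G H, agreeOff G v x] = false.
    apply/negbTE/negP => /existsP [w /andP [hw hxw]].
    by move: hv; rewrite -(aO_uniq hxw hx xG) hw.
  rewrite addn0 /ham (cardsD1 v (dset G H)) (negbTE hv) add0n.
  exact: subset_leq_card.
case/and4P => hL1 hL2 hnot hdiag.
suff : ham x y < ham G H.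
  by case: existsP => _ h; rewrite ?addn1 ?addn0 // ltnW.
case/orP: hL1 => [/eqP ex|/existsP [v /andP [hv /eqP ex]]];
  case/orP: hL2 => [/eqP ey|/existsP [w /andP [hw /eqP ey]]].
- by move: hnot; rewrite ex ey !eqxx.
- rewrite dsetC in hw; apply: (dset_sub_card hw).
  apply/subsetP => u; rewrite ex ey !inE nb_mix; case: (u =P w) => [_|_]; first by rewrite eqxx.
  by move=> h; rewrite h.
- apply: (dset_sub_card hv).
  apply/subsetP => u; rewrite ex ey !inE nb_mix; case: (u =P v) => [_|_]; first by rewrite eqxx.
  by move=> h; rewrite h.
- have hvw : v != w.
    apply/eqP => evw; move/negP: hdiag; apply; apply/existsP.
    by exists v; rewrite hv ex ey evw !eqxx.
  apply: (dset_sub_card hv).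
  apply/subsetP => u; rewrite ex ey !inE !nb_mix.
  case: (u =P v) => [->|_]; first by rewrite (negbTE hvw) eqxx.
  by case: (u =P w) => [_|_]; rewrite ?eqxx // => h; rewrite h.
Qed.

End Coupling.

Section Real.
Variable R : realFieldType.
Variables n d : nat.
Local Notation T := (outreg n d).
Local Open Scope ring_scope.

Definition Cst : R := ((n * ('C(n.-1, d) - 1) + 1)%N%:R)^-1.
Definition Acoup (G H : T) (x y : T) : R :=
  Cst * ((Pc G H x y)%:R + (Qc G H x y)%:R / (ham G H)%:R).

Lemma Cst_ge0 : 0 <= Cst.
Proof. by rewrite /Cst invr_ge0 ler0n. Qed.

Lemma Acoup_ge0 G H x y : 0 <= Acoup G H x y.
Proof. by rewrite /Acoup mulr_ge0 ?Cst_ge0 // addr_ge0 ?divr_ge0 ?ler0n. Qed.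

Lemma Acoup_sym G H x y : Acoup G H x y = Acoup H G y x.
Proof. by rewrite /Acoup Pc_sym Qc_sym hamC. Qed.

Lemma sum_bool (b : pred T) : \sum_y ((b y)%:R : R) = (#|[set y | b y]|)%:R.
Proof. by rewrite card_sum natr_sum. Qed.

Lemma Hwalk_supp G x : @Hwalk R n d G x = Cst * ((x == G) || Hadj G x)%:R.
Proof. by rewrite /Hwalk; case: ifP => _; rewrite ?mulr1 ?mulr0. Qed.

Lemma row_sum G H x : G != H -> \sum_y Acoup G H x y = @Hwalk R n d G x.
Proof.
move=> hGH.
have hk : (ham G H)%:R != 0 :> R.
  by rewrite pnatr_eq0; apply/eqP => /ham0 e; rewrite e eqxx in hGH.
rewrite -mulr_sumr big_split /= -mulr_suml !sum_bool card_Pc card_Qc Hwalk_supp -(R1_L1_supp G H x).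
congr (_ * _).
have := R1_L1 G H x.
by case: (R1 G H x); case: (L1 G H x) => //= _; rewrite ?mul0r ?addr0 ?add0r ?mulfV.
Qed.

End Real.
Arguments Acoup {R n d}.
Local Open Scope ring_scope.

Theorem mainTheorem8 (R : realFieldType) (n d : nat)
  (hn : (3 <= n)%N) (hd1 : (1 <= d)%N) (hd2 : (d <= n - 2)%N)
  (G1 G2 : outreg n d) (hneq : G1 != G2) :
  ricci_ge (@Hadj n d) (@Hwalk R n d) G1 G2 (n%:R)^-1.
Proof.
set k := ham G1 G2.
have hk0 : (0 < k)%N by rewrite lt0n; apply/eqP => /ham0 e; rewrite e eqxx in hneq.
set U := fun x : outreg n d => [exists v in dset G1 G2, agreeOff G1 v x].
set S := fun x : outreg n d => [exists v, agreeOff G1 v x].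
set D1 := ('C(n.-1, d) - 1)%N.
have v0 : 'I_n := Ordinal (leq_trans (isT : (0 < 3)%N) hn).
have hS : forall x, ((x == G1) || Hadj G1 x) = S x.
  move=> x; rewrite HadjE /S; case: (x =P G1) => [->|_] /=; last done.
  by apply/esym/existsP; exists v0; exact: aO_refl.
have hUS : forall x, U x -> S x.
  by move=> x /existsP [v /andP [_ h]]; apply/existsP; exists v.
have cardS : #|[set x | S x]| = (1 + n * D1)%N.
  have := @card_U n d G1 setT; rewrite cardsT card_ord => <-.
    apply: eq_card => x; rewrite !inE /S; apply: eq_existsb => v.
    by rewrite in_setT.
  by apply/set0Pn; exists v0; rewrite in_setT.
have cardU : #|[set x | U x]| = (1 + k * D1)%N.
  by rewrite /U card_U // -card_gt0.
have hkn : (k <= n)%N.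
  by rewrite /k /ham (leq_trans (max_card _)) ?card_ord.
have hkT : (k <= #|outreg n d|)%N.
  by apply: leq_trans (max_card (mem [set y | L1 G1 G2 y])); rewrite card_L1.
have hg := gdist_ge hkT.
set sA := (\sum_x ((k - U x) * S x))%N.
have hsum : (sA + #|[set x | U x]| = k * #|[set x | S x]|)%N.
  rewrite !card_sum /sA -big_split big_distrr /=; apply: eq_bigr => x _.
  case hu: (U x); case hs: (S x) => /=.
  - by rewrite !muln1 subnK.
  - by move: (hUS x); rewrite hu hs => /(_ isT).
  - by rewrite !muln1 subn0 addn0.
  - by rewrite !muln0.
have nat_ineq : (sA * n <= (n - 1) * k * (n * D1 + 1))%N.
  rewrite cardU cardS in hsum.
  nia.
move=> eps heps; exists (Acoup G1 G2); split.
  split; [exact: Acoup_ge0 | by move=> x; exact: row_sum | ].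
  move=> y; rewrite (eq_bigr (fun x => Acoup G2 G1 y x)); last by move=> x _; exact: Acoup_sym.
  by apply: row_sum; rewrite eq_sym.
rewrite -[X in X <= _]addr0; apply: lerD; last exact: ltW.
have step1 : transport_cost (@Hadj n d) ((@Acoup R n d G1 G2)) <=
    \sum_x \sum_y (@Acoup R n d G1 G2) x y * ((k - U x)%N)%:R.
  rewrite /transport_cost; apply: ler_sum => x _; apply: ler_sum => y _.
  case: (boolP (Pc G1 G2 x y || Qc G1 G2 x y)) => h.
    apply: ler_wpM2l; first exact: Acoup_ge0.
    rewrite ler_nat; have := cost_bound h; have := gdist_le x y; rewrite -/k -/(U x).
    move=> h1 h2; apply: leq_trans h1 _.
    by rewrite -(leq_add2r (U x)) subnK // (leq_trans _ h2) // leq_addl.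
  have -> : @Acoup R n d G1 G2 x y = 0.
    rewrite /Acoup; move: h; rewrite negb_or => /andP [/negbTE -> /negbTE ->].
    by rewrite /= !mulr0n mul0r addr0 mulr0.
  by rewrite !mul0r.
have step2 : \sum_x \sum_y (@Acoup R n d G1 G2) x y * ((k - U x)%N)%:R = Cst R n d * (sA%:R).
  rewrite /sA natr_sum mulr_sumr; apply: eq_bigr => x _.
  rewrite -mulr_suml row_sum // Hwalk_supp hS natrM.
  by rewrite -mulrA [(S x)%:R * _]mulrC.
apply: le_trans step1 _; rewrite step2.
have hn0 : (0 < n)%N by apply: leq_trans hn.
have hN : (0 : R) < (n * D1 + 1)%N%:R by rewrite ltr0n addn1.
apply: (@le_trans _ _ ((1 - n%:R^-1) * k%:R)); last first.
  apply: ler_wpM2l; last by rewrite ler_nat.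
  by rewrite subr_ge0 invf_le1 ?ltr0n // ler1n.
rewrite /Cst mulrC ler_pdivrMr // -/D1.
have e1 : (1 - n%:R^-1) * k%:R * (n * D1 + 1)%N%:R = ((n - 1) * k * (n * D1 + 1))%N%:R / n%:R :> R.
  rewrite !natrM natrB // ; field.
  by rewrite pnatr_eq0 -lt0n.
rewrite e1 ler_pdivlMr ?ltr0n // -natrM ler_nat.
exact: nat_ineq.
Qed.
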